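(* Let $x=\sum_{n\in F}\alpha_ne_n$ be an extreme point of $B_J$ and let $\{I_n\}_{n\in F}$ be a family of intervals of $\mathbb N$. If $\bigcup_{n\in\mathrm{supp}(x)}I_n$ is not an interval of $\mathbb N$, then $x^*=\sum_{n\in F}\alpha_nI_n^*$ is not an extreme point of $B_{J^*}$.
   Context: For a real sequence $x=(x(n))_{n\in\mathbb N}$ let $\|x\|_J=\sup\bigl(\sum_{i=1}^n|\sum_{k\in I_i}x(k)|^2\bigr)^{1/2}$ over all $n$ and all families of pairwise disjoint intervals $I_1,\dots,I_n$ of $\mathbb N$ (intervals: nonempty sets of consecutive positive integers, possibly infinite). $J=\{x:\|x\|_J<\infty\}$ with unit vector basis $(e_n)$ and closed unit ball $B_J$; $J^*$ is its dual with closed unit ball $B_{J^*}$. $\mathrm{supp}(x)=\{n:x(n)\ne0\}$. For an interval $I$, $I^*\in J^*$ is $I^*(x)=\sum_{n\in I}x(n)$. A family of intervals $\{I_i\}_{i\in F}$: $F=\{1,\dots,k\}$ or $F=\mathbb N$, each $I_i$ an interval, $\max I_i<\min I_{i+1}$ whenever $i+1\in F$; $\sum_{i\in F}\alpha_iI_i^*$ denotes the functional $x\mapsto\sum_{i\in F}\alpha_iI_i^*(x)$ (here $\sum\alpha_i^2=1$, so this is a functional of norm at most $1$). *)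

(* Defs.v *)
From Stdlib Require Import Reals Lra List.
From Coquelicot Require Import Coquelicot.
Open Scope R_scope.

(* Convention: the positive integers 1,2,3,... are represented by the Rocq
   naturals 0,1,2,... (index shift by one).  Sequences are maps nat -> R. *)

(* An interval of N: a nonempty set of consecutive integers, either
   [lo, b] (hi = Some b, lo <= b) or [lo, +oo) (hi = None). *)
Record interval := mkInterval {
  lo : nat;
  hi : option nat;
  hi_ok : forall b, hi = Some b -> (lo <= b)%nat }.

Definition inI (I : interval) (k : nat) : Prop :=
  (lo I <= k)%nat /\ (forall b, hi I = Some b -> (k <= b)%nat).

Definition Isum (I : interval) (y : nat -> R) : R :=
  match hi I with
  | Some b => sum_n_m y (lo I) b
  | None => Series (fun k => y (lo I + k)%nat)
  end.

Definition pairwise_disjoint (l : list interval) : Prop :=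
  forall i j, (i < length l)%nat -> (j < length l)%nat -> i <> j ->
    forall d k, inI (nth i l d) k -> ~ inI (nth j l d) k.

Definition sq_sum (l : list interval) (y : nat -> R) : R :=
  fold_right (fun I acc => (Isum I y) ^ 2 + acc) 0 l.

(* y in J: all interval sums exist (equivalently the series sum y converges)
   and ||y||_J < oo. *)
Definition inJ (y : nat -> R) : Prop :=
  ex_series y /\
  exists M : R, forall l, pairwise_disjoint l -> sq_sum l y <= M.

Definition in_BJ (y : nat -> R) : Prop :=
  ex_series y /\
  forall l, pairwise_disjoint l -> sq_sum l y <= 1.

Definition extreme_BJ (x : nat -> R) : Prop :=
  in_BJ x /\
  forall (y z : nat -> R) (t : R), in_BJ y -> in_BJ z -> 0 < t < 1 ->
    (forall n, x n = t * y n + (1 - t) * z n) -> y = z.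

(* Elements of J^*: functionals, only their values on J matter. *)
Definition linear_on_J (f : (nat -> R) -> R) : Prop :=
  forall (a b : R) (y z : nat -> R), inJ y -> inJ z ->
    f (fun n => a * y n + b * z n) = a * f y + b * f z.

Definition in_BJdual (f : (nat -> R) -> R) : Prop :=
  linear_on_J f /\ forall y, in_BJ y -> Rabs (f y) <= 1.

Definition extreme_BJdual (f : (nat -> R) -> R) : Prop :=
  in_BJdual f /\
  forall (g h : (nat -> R) -> R) (t : R), in_BJdual g -> in_BJdual h ->
    0 < t < 1 -> (forall y, inJ y -> f y = t * g y + (1 - t) * h y) ->
    forall y, inJ y -> g y = h y.

(* Index sets F = {1,...,k} (Some k, k >= 1) or F = N (None);
   shifted: {0,...,k-1} or all of nat. *)
Definition inF (F : option nat) (n : nat) : Prop :=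
  match F with None => True | Some k => (n < k)%nat end.

Definition inFb (F : option nat) (n : nat) : bool :=
  match F with None => true | Some k => Nat.ltb n k end.

Definition index_set_ok (F : option nat) : Prop :=
  match F with None => True | Some k => (1 <= k)%nat end.

Definition before (I J : interval) : Prop :=
  match hi I with Some b => (b < lo J)%nat | None => False end.

Definition interval_family (F : option nat) (Ifam : nat -> interval) : Prop :=
  forall n, inF F n -> inF F (S n) -> before (Ifam n) (Ifam (S n)).

Definition xseq (F : option nat) (alpha : nat -> R) : nat -> R :=
  fun n => if inFb F n then alpha n else 0.

Definition xstar (F : option nat) (alpha : nat -> R) (Ifam : nat -> interval)
  : (nat -> R) -> R :=
  fun y => Series (fun n => if inFb F n then alpha n * Isum (Ifam n) y else 0).

Definition supp (x : nat -> R) (n : nat) : Prop := x n <> 0.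

Definition is_interval (U : nat -> Prop) : Prop :=
  (exists k, U k) /\
  forall a b c, U a -> U b -> (a <= c)%nat -> (c <= b)%nat -> U c.

Definition supp_union (x : nat -> R) (Ifam : nat -> interval) (k : nat) : Prop :=
  exists n, supp x n /\ inI (Ifam n) k.

(* Main.v *)
Require Import Defs.
From Stdlib Require Import Reals Lra Lia List Classical.
From Coquelicot Require Import Coquelicot.
Open Scope R_scope.


Definition disj (I J : interval) : Prop := forall k, inI I k -> ~ inI J k.

Lemma disj_sym I J : disj I J -> disj J I.
Proof. intros H k H1 H2. exact (H k H2 H1). Qed.

Lemma pd_cons I l : (forall J, In J l -> disj I J) -> pairwise_disjoint l ->
  pairwise_disjoint (I :: l).
Proof.
  intros HI Hl i j Hi Hj Hij d k Hk Hk'.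
  destruct i as [|i], j as [|j]; simpl in *.
  - lia.
  - exact (HI (nth j l d) ltac:(apply nth_In; lia) k Hk Hk').
  - exact (HI (nth i l d) ltac:(apply nth_In; lia) k Hk' Hk).
  - apply (Hl i j ltac:(lia) ltac:(lia) ltac:(lia) d k); assumption.
Qed.

Lemma pd_inv I l : pairwise_disjoint (I :: l) ->
  pairwise_disjoint l /\ (forall J, In J l -> disj I J).
Proof.
  intros H; split.
  - intros i j Hi Hj Hij d k.
    apply (H (S i) (S j) ltac:(simpl; lia) ltac:(simpl; lia) ltac:(lia) d k).
  - intros J HJ k Hk Hk'. destruct (In_nth l J I HJ) as [j [Hj Hn]].
    apply (H 0%nat (S j) ltac:(simpl;lia) ltac:(simpl;lia) ltac:(lia) I k);
      simpl; [exact Hk| rewrite Hn; exact Hk'].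
Qed.

Definition sumL (f : R * interval -> R) (ps : list (R * interval)) : R :=
  fold_right (fun p acc => f p + acc) 0 ps.

Lemma key_ineq y ps :
  sumL (fun p => Rabs (fst p) * Rabs (Isum (snd p) y)) ps <=
  (sumL (fun p => (fst p)^2) ps + sq_sum (map snd ps) y) / 2.
Proof.
  induction ps as [|[b K] ps IH]; [unfold sumL, sq_sum; simpl; lra|].
  assert (Rabs b * Rabs (Isum K y) <= (b^2 + (Isum K y)^2)/2).
  { rewrite <- (pow2_abs b), <- (pow2_abs (Isum K y)).
    pose proof (pow2_ge_0 (Rabs b - Rabs (Isum K y))). nra. }
  unfold sq_sum, sumL in *. cbn [fold_right map fst snd] in *. lra.
Qed.

Fixpoint build (be : nat -> R) (K : nat -> interval) (N : nat) : list (R * interval) :=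
  match N with
  | O => if Req_EM_T (be O) 0 then nil else (be O, K O) :: nil
  | S N' => if Req_EM_T (be N) 0 then build be K N' else (be N, K N) :: build be K N'
  end.

Lemma build_sum (f : R -> interval -> R) be K N :
  (forall J, f 0 J = 0) ->
  sumL (fun p => f (fst p) (snd p)) (build be K N) = sum_n (fun j => f (be j) (K j)) N.
Proof.
  intros Hf. induction N as [|N IH].
  - rewrite sum_O. simpl. destruct (Req_EM_T (be O) 0) as [E|E]; simpl.
    + rewrite E, Hf; reflexivity.
    + lra.
  - rewrite sum_Sn. simpl. change (plus ?a ?b) with (a + b).
    destruct (Req_EM_T (be (S N)) 0) as [E|E]; simpl.
    + rewrite IH, E, Hf. lra.
    + rewrite <- IH. unfold sumL. simpl. lra.
Qed.

Lemma build_in be K N p : In p (build be K N) ->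
  exists j, (j <= N)%nat /\ be j <> 0 /\ p = (be j, K j).
Proof.
  induction N as [|N IH]; simpl.
  - destruct (Req_EM_T (be O) 0) as [E|E]; simpl; [tauto|].
    intros [H|[]]. exists O; auto.
  - destruct (Req_EM_T (be (S N)) 0) as [E|E]; simpl.
    + intros H; destruct (IH H) as [j [? ?]]; exists j; split; [lia|auto].
    + intros [H|H]; [exists (S N); auto|].
      destruct (IH H) as [j [? ?]]; exists j; split; [lia|auto].
Qed.

Lemma build_pd be K N :
  (forall i j, i <> j -> be i <> 0 -> be j <> 0 -> disj (K i) (K j)) ->
  pairwise_disjoint (map snd (build be K N)).
Proof.
  intros Hd. induction N as [|N IH]; simpl.
  - destruct (Req_EM_T (be O) 0); simpl.
    + intros i j Hi; simpl in Hi; lia.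
    + apply pd_cons; [simpl; tauto|]. intros i j Hi; simpl in Hi; lia.
  - destruct (Req_EM_T (be (S N)) 0) as [E|E]; simpl; auto.
    apply pd_cons; auto.
    intros J HJ. apply in_map_iff in HJ. destruct HJ as [p [Hp Hin]].
    destruct (build_in _ _ _ _ Hin) as [j [Hj [Hbj ->]]]. simpl in Hp; subst J.
    apply Hd; auto; lia.
Qed.

Lemma phi_partial be K y M :
  (forall N, sum_n (fun j => (be j)^2) N <= 1) ->
  (forall i j, i <> j -> be i <> 0 -> be j <> 0 -> disj (K i) (K j)) ->
  (forall l, pairwise_disjoint l -> sq_sum l y <= M) ->
  forall N, sum_n (fun j => Rabs (be j * Isum (K j) y)) N <= (1 + M)/2.
Proof.
  intros H1 H2 H3 N.
  assert (E : sum_n (fun j => Rabs (be j * Isum (K j) y)) N =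
     sumL (fun p => Rabs (fst p) * Rabs (Isum (snd p) y)) (build be K N)).
  { rewrite (build_sum (fun b J => Rabs b * Rabs (Isum J y))).
    - apply sum_n_ext; intros; apply Rabs_mult.
    - intros; rewrite Rabs_R0; ring. }
  rewrite E.
  eapply Rle_trans; [apply key_ineq|].
  rewrite (build_sum (fun b J => b^2)) by (intros; simpl; ring).
  specialize (H1 N). specialize (H3 _ (build_pd be K N H2)). lra.
Qed.

Lemma ex_series_bounded_pos a M :
  (forall n, 0 <= a n) -> (forall N, sum_n a N <= M) -> ex_series a.
Proof.
  intros Hp HM.
  destruct (ex_finite_lim_seq_incr (sum_n a) M) as [l Hl]; auto.
  - intros n. rewrite sum_Sn. change (plus ?x ?y) with (x + y). specialize (Hp (S n)). lra.
  - exists l. exact Hl.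
Qed.

Lemma series_le_bound a l C : is_series a l -> (forall N, sum_n a N <= C) -> l <= C.
Proof.
  intros Ha HC.
  assert (H := is_lim_seq_le (sum_n a) (fun _ => C) l C HC Ha (is_lim_seq_const C)).
  simpl in H. exact H.
Qed.

Lemma phi_ex be K y M :
  (forall N, sum_n (fun j => (be j)^2) N <= 1) ->
  (forall i j, i <> j -> be i <> 0 -> be j <> 0 -> disj (K i) (K j)) ->
  (forall l, pairwise_disjoint l -> sq_sum l y <= M) ->
  ex_series (fun j => be j * Isum (K j) y).
Proof.
  intros H1 H2 H3. apply ex_series_Rabs.
  apply ex_series_bounded_pos with ((1+M)/2).
  - intros; apply Rabs_pos.
  - apply phi_partial; auto.
Qed.

Lemma phi_bound be K y :
  (forall N, sum_n (fun j => (be j)^2) N <= 1) ->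
  (forall i j, i <> j -> be i <> 0 -> be j <> 0 -> disj (K i) (K j)) ->
  in_BJ y ->
  Rabs (Series (fun j => be j * Isum (K j) y)) <= 1.
Proof.
  intros H1 H2 [_ H3].
  assert (Hex : ex_series (fun j => Rabs (be j * Isum (K j) y))).
  { apply ex_series_bounded_pos with ((1+1)/2).
    - intros; apply Rabs_pos.
    - apply phi_partial; auto. }
  eapply Rle_trans; [apply Series_Rabs; exact Hex|].
  replace 1 with ((1+1)/2) by lra.
  apply series_le_bound with (a := fun j => Rabs (be j * Isum (K j) y)).
  - apply Series_correct; exact Hex.
  - apply phi_partial; auto.
Qed.


Definition ind (d : nat) (c : R) : nat -> R := fun k => if Nat.eq_dec k d then c else 0.

Lemma sum_ind d c N : sum_n (ind d c) N = if (d <=? N)%nat then c else 0.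
Proof.
  induction N as [|N IH].
  - rewrite sum_O. unfold ind. destruct d; simpl; reflexivity.
  - rewrite sum_Sn, IH. change (plus ?x ?y) with (x + y). unfold ind.
    destruct (Nat.eq_dec (S N) d); destruct (Nat.leb_spec d N); destruct (Nat.leb_spec d (S N));
      try lia; lra.
Qed.

Lemma is_series_ind d c : is_series (ind d c) c.
Proof.
  change (is_lim_seq (sum_n (ind d c)) c).
  apply is_lim_seq_ext_loc with (fun _ => c); [|apply is_lim_seq_const].
  exists d; intros n Hn. rewrite sum_ind. destruct (Nat.leb_spec d n); [reflexivity| lia].
Qed.

Lemma Series_ind_split a d c : ex_series a ->
  Series (fun j => a j + ind d c j) = Series a + c.
Proof.
  intros Ha. rewrite Series_plus; auto.
  - rewrite (is_series_unique _ _ (is_series_ind d c)). reflexivity.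
  - exists c; apply is_series_ind.
Qed.

Lemma sum_n_m_ind d c a b : (a <= S b)%nat ->
  sum_n_m (ind d c) a b = if (andb (a <=? d)%nat (d <=? b)%nat) then c else 0.
Proof.
  intros Hab. destruct a as [|a].
  - change (sum_n (ind d c) b = if (andb (0 <=? d)%nat (d <=? b)%nat) then c else 0).
    rewrite sum_ind. reflexivity.
  - rewrite (sum_n_m_sum_n (G:=R_AbelianGroup)) by lia. change (minus ?x ?y) with (x - y).
    rewrite !sum_ind.
    destruct (Nat.leb_spec d b); destruct (Nat.leb_spec d a); destruct (Nat.leb_spec (S a) d);
      simpl; try lia; lra.
Qed.

Definition e (c : nat) : nat -> R := ind c 1.

Lemma isum_e K c : (inI K c -> Isum K (e c) = 1) /\ (~ inI K c -> Isum K (e c) = 0).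
Proof.
  destruct K as [a [b|] Hh]; unfold Isum, inI; simpl.
  - assert (Hab := Hh b eq_refl). unfold e. rewrite sum_n_m_ind by lia.
    split; intros H.
    + destruct H as [H1 H2]. specialize (H2 b eq_refl).
      destruct (Nat.leb_spec a c); destruct (Nat.leb_spec c b); simpl; try lia; reflexivity.
    + destruct (Nat.leb_spec a c); destruct (Nat.leb_spec c b); simpl; try reflexivity.
      exfalso; apply H; split; [lia|]. intros b' E; inversion E; lia.
  - split; intros H.
    + destruct H as [H1 _].
      rewrite (Series_ext _ (ind (c - a) 1)).
      * apply is_series_unique, is_series_ind.
      * intros k. unfold e, ind. destruct (Nat.eq_dec (a+k) c), (Nat.eq_dec k (c-a)); lia || reflexivity.
    + assert (Hac : (c < a)%nat).
      { destruct (Nat.lt_ge_cases c a); auto. exfalso; apply H; split; auto. intros; discriminate. }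
      rewrite (Series_ext _ (ind 0 0)).
      * apply is_series_unique, is_series_ind.
      * intros k. unfold e, ind. destruct (Nat.eq_dec (a+k) c), (Nat.eq_dec k 0); lia || reflexivity.
Qed.

Lemma sq_sum_e0 l c : (forall K, In K l -> ~ inI K c) -> sq_sum l (e c) = 0.
Proof.
  induction l as [|K l IH]; intros H; [reflexivity|].
  unfold sq_sum; cbn [fold_right]. fold (sq_sum l (e c)).
  rewrite IH by (intros; apply H; simpl; auto).
  rewrite (proj2 (isum_e K c)) by (apply H; simpl; auto). ring.
Qed.

Lemma sq_sum_e l c : pairwise_disjoint l -> sq_sum l (e c) <= 1.
Proof.
  induction l as [|K l IH]; intros H; [unfold sq_sum; simpl; lra|].
  destruct (pd_inv _ _ H) as [Hl Hd].
  unfold sq_sum; cbn [fold_right]. fold (sq_sum l (e c)).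
  destruct (classic (inI K c)) as [Hc|Hc].
  - rewrite sq_sum_e0 by (intros J HJ; exact (Hd J HJ c Hc)).
    rewrite (proj1 (isum_e K c) Hc). lra.
  - rewrite (proj2 (isum_e K c) Hc). specialize (IH Hl). lra.
Qed.

Lemma e_inJ c : inJ (e c).
Proof.
  split.
  - exists 1; apply is_series_ind.
  - exists 1; intros; apply sq_sum_e; auto.
Qed.

Lemma inF_le F i j : (i <= j)%nat -> inF F j -> inF F i.
Proof. destruct F; simpl; auto; lia. Qed.

Lemma inFb_inF F j : inFb F j = true -> inF F j.
Proof. destruct F; simpl; auto. intros H; apply Nat.ltb_lt; auto. Qed.

Lemma order_aux F I : interval_family F I -> forall d i, inF F (i + S d) ->
  exists b, hi (I i) = Some b /\ (b < lo (I (i + S d)))%nat.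
Proof.
  intros HF d. induction d as [|d IH]; intros i Hi.
  - replace (i + 1)%nat with (S i) in * by lia.
    assert (H := HF i (inF_le F i (S i) ltac:(lia) Hi) Hi). unfold before in H.
    destruct (hi (I i)); [eauto|contradiction].
  - destruct (IH i (inF_le F (i + S d) (i + S (S d)) ltac:(lia) Hi)) as [b [Hb Hlt]].
    replace (i + S (S d))%nat with (S (i + S d)) in * by lia.
    assert (H := HF _ (inF_le F (i + S d) (S (i + S d)) ltac:(lia) Hi) Hi). unfold before in H.
    destruct (hi (I (i + S d)%nat)) eqn:E; [|contradiction].
    assert (H2 := hi_ok _ _ E). exists b; split; auto; lia.
Qed.

Lemma order F I i j : interval_family F I -> (i < j)%nat -> inF F j ->
  exists b, hi (I i) = Some b /\ (b < lo (I j))%nat.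
Proof.
  intros HF Hij Hj. replace j with (i + S (j - i - 1))%nat in * by lia.
  apply (order_aux F I HF); auto.
Qed.

Lemma order_in F I i j k : interval_family F I -> (i < j)%nat -> inF F j ->
  inI (I i) k -> (k < lo (I j))%nat.
Proof.
  intros HF Hij Hj [_ Hk]. destruct (order F I i j HF Hij Hj) as [b [Hb Hlt]].
  specialize (Hk b Hb). lia.
Qed.

Lemma order_lo F I i j : interval_family F I -> (i <= j)%nat -> inF F j ->
  (lo (I i) <= lo (I j))%nat.
Proof.
  intros HF Hij Hj. destruct (Nat.eq_dec i j) as [->|Hne]; [lia|].
  destruct (order F I i j HF ltac:(lia) Hj) as [b [Hb Hlt]].
  assert (H := hi_ok _ _ Hb). lia.
Qed.

Lemma least (P : nat -> Prop) : (exists n, P n) -> exists n, P n /\ forall i, (i < n)%nat -> ~ P i.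
Proof.
  intros [n Hn]. induction n as [n IH] using (well_founded_induction Wf_nat.lt_wf).
  destruct (classic (exists i, (i < n)%nat /\ P i)) as [[i [Hi HPi]]|H].
  - exact (IH i Hi HPi).
  - exists n; split; auto. intros i Hi HPi. apply H; eauto.
Qed.

Lemma greatest (P : nat -> Prop) m : (exists n, (n < m)%nat /\ P n) ->
  exists n, (n < m)%nat /\ P n /\ forall i, (n < i < m)%nat -> ~ P i.
Proof.
  induction m as [|m IH]; intros [n [Hn HPn]]; [lia|].
  destruct (classic (P m)) as [Hm|Hm].
  - exists m; repeat split; auto; lia.
  - destruct IH as [k [Hk [HPk Hmax]]].
    + exists n; split; auto. destruct (Nat.eq_dec n m); [subst; contradiction|lia].
    + exists k; split; [lia|split; [exact HPk|]]. intros i Hi.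
      destruct (Nat.eq_dec i m); [subst; auto|]. apply Hmax; lia.
Qed.


Definition mk_fin (a b : nat) : interval.
Proof. refine (mkInterval a (Some (Nat.max a b)) _). intros c H; injection H; lia. Defined.

Definition Sing (j : nat) : interval := mk_fin j j.

Lemma partial_le_limit a l N : is_series a l -> (forall j, 0 <= a j) -> sum_n a N <= l.
Proof.
  intros Ha Hp.
  assert (H1 : is_lim_seq (fun n => sum_n a (n + N)) l).
  { apply (is_lim_seq_incr_n (sum_n a) N l). exact Ha. }
  assert (H2 : forall n, sum_n a N <= sum_n a (n + N)).
  { induction n as [|n IH]; [simpl; lra|]. simpl. rewrite sum_Sn.
    change (plus ?x ?y) with (x + y). specialize (Hp (S (n + N))). lra. }
  assert (H := is_lim_seq_le (fun _ => sum_n a N) _ (sum_n a N) l H2 (is_lim_seq_const _) H1).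
  simpl in H. exact H.
Qed.

Lemma sum_ends a n m : (n < m)%nat -> (forall j, (n < j < m)%nat -> a j = 0) ->
  sum_n_m a n m = a n + a m.
Proof.
  intros Hnm Hz. rewrite sum_Sn_m by lia. change (plus ?x ?y) with (x + y).
  destruct m as [|m]; [lia|].
  rewrite sum_n_Sm by lia. change (plus ?x ?y) with (x + y).
  assert (Z : sum_n_m a (S n) m = 0).
  { rewrite (sum_n_m_ext_loc a (fun _ => zero)); [apply (sum_n_m_const_zero (G:=R_AbelianMonoid))|intros; apply Hz; lia]. }
  rewrite Z, Rplus_0_l; reflexivity.
Qed.

Lemma sign_lemma be n m : (n < m)%nat -> be n <> 0 -> be m <> 0 ->
  (forall j, (n < j < m)%nat -> be j = 0) ->
  is_series (fun j => be j ^ 2) 1 -> in_BJ be -> be n * be m < 0.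
Proof.
  intros Hnm Hn Hm Hz Hser [_ HB].
  set (ga := fun j => if andb (n <=? j)%nat (j <=? m)%nat then 0 else be j).
  set (Ga := fun N => sum_n (fun j => ga j ^ 2) N).
  assert (Claim : forall h N, h * (be n + be m) + Ga N <= (h^2 + Ga N + 1)/2).
  { intros h N.
    set (ps := (h, mk_fin n m) :: build ga Sing N).
    assert (K1 := key_ineq be ps).
    assert (Hpd : pairwise_disjoint (map snd ps)).
    { unfold ps; cbn [map snd fst]. apply pd_cons.
      - intros J HJ. apply in_map_iff in HJ. destruct HJ as [p [Hp Hin]].
        destruct (build_in _ _ _ _ Hin) as [j [_ [Hgj ->]]]. simpl in Hp; subst J.
        unfold ga in Hgj.
        destruct (Nat.leb_spec n j); destruct (Nat.leb_spec j m); simpl in Hgj;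
          try (exfalso; apply Hgj; reflexivity);
        intros k [H1 H2] [H3 H4]; simpl in *;
        specialize (H2 _ eq_refl); specialize (H4 _ eq_refl); lia.
      - apply build_pd. intros i j Hij _ _ k [H1 H2] [H3 H4]; simpl in *.
        specialize (H2 _ eq_refl); specialize (H4 _ eq_refl); lia. }
    assert (K2 := HB _ Hpd).
    assert (E1 : sumL (fun p => Rabs (fst p) * Rabs (Isum (snd p) be)) ps =
                 Rabs h * Rabs (be n + be m) + Ga N).
    { unfold ps, sumL. cbn [fold_right fst snd]. fold (sumL (fun p => Rabs (fst p) * Rabs (Isum (snd p) be)) (build ga Sing N)).
      rewrite (build_sum (fun b J => Rabs b * Rabs (Isum J be))) by (intros; rewrite Rabs_R0; ring).
      f_equal.
      - f_equal. f_equal. unfold Isum; simpl. rewrite Nat.max_r by lia. apply sum_ends; auto.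
      - unfold Ga. apply sum_n_ext. intros j. unfold Sing, Isum; simpl.
        rewrite Nat.max_id, sum_n_n. unfold ga.
        destruct (andb _ _).
        + rewrite Rabs_R0; ring.
        + rewrite <- Rabs_mult. rewrite Rabs_pos_eq; [ring|]. nra. }
    assert (E2 : sumL (fun p => (fst p)^2) ps = h^2 + Ga N).
    { unfold ps, sumL. cbn [fold_right fst snd]. fold (sumL (fun p => (fst p)^2) (build ga Sing N)).
      rewrite (build_sum (fun b J => b^2)) by (intros; simpl; ring). reflexivity. }
    rewrite E1, E2 in K1.
    assert (h * (be n + be m) <= Rabs h * Rabs (be n + be m)).
    { rewrite <- Rabs_mult. apply Rle_abs. }
    lra. }
  assert (Sbound : forall N, sum_n (fun j => be j ^ 2) N <= Ga N + be n ^ 2 + be m ^ 2).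
  { intros N.
    assert (Ep : forall j, be j ^ 2 = ga j ^ 2 + ind n (be n ^ 2) j + ind m (be m ^ 2) j).
    { intros j. unfold ga, ind.
      destruct (Nat.eq_dec j n) as [E1|Hjn]; destruct (Nat.eq_dec j m) as [E2|Hjm]; try lia.
      - subst j. destruct (Nat.leb_spec n n); destruct (Nat.leb_spec n m); try lia; simpl; ring.
      - subst j. destruct (Nat.leb_spec n m); destruct (Nat.leb_spec m m); try lia; simpl; ring.
      - destruct (Nat.leb_spec n j); destruct (Nat.leb_spec j m); simpl; try ring.
        rewrite Hz by lia. ring. }
    rewrite (sum_n_ext _ _ N Ep).
    rewrite !(sum_n_plus (G:=R_AbelianMonoid)). change (plus ?x ?y) with (x + y).
    rewrite !sum_ind. fold (Ga N).
    change (plus ?x ?y) with (x + y). destruct (Nat.leb _ _), (Nat.leb _ _); nra. }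
  assert (L1 : 2 * (be n * be m) <= be m ^ 2).
  { assert (1 <= 1 - 2 * (be n * be m) + be m ^ 2); [|lra].
    apply (series_le_bound _ _ _ Hser). intros N.
    change (@sum_n (NormedModule.AbelianMonoid R_AbsRing R_NormedModule) ?f N) with (@sum_n R_AbelianMonoid f N).
    specialize (Sbound N). specialize (Claim (be n) N).
    assert (be n * (be n + be m) = be n ^ 2 + be n * be m) by ring. lra. }
  assert (L2 : 2 * (be n * be m) <= be n ^ 2).
  { assert (1 <= 1 - 2 * (be n * be m) + be n ^ 2); [|lra].
    apply (series_le_bound _ _ _ Hser). intros N.
    change (@sum_n (NormedModule.AbelianMonoid R_AbsRing R_NormedModule) ?f N) with (@sum_n R_AbelianMonoid f N).
    specialize (Sbound N). specialize (Claim (be m) N).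
    assert (be m * (be n + be m) = be m ^ 2 + be n * be m) by ring. lra. }
  destruct (Rlt_or_le (be n * be m) 0) as [H|H]; auto.
  exfalso.
  assert (Hp : 0 < be n * be m).
  { destruct H as [H|H]; auto. exfalso. symmetry in H. apply Rmult_integral in H. tauto. }
  set (p := be n * be m) in *.
  assert (p * p = be n ^ 2 * be m ^ 2) by (unfold p; ring).
  assert (2 * p * (2 * p) <= be n ^ 2 * be m ^2).
  { apply Rmult_le_compat; nra. }
  nra.
Qed.


Lemma sum_lin (a b : R) (y z : nat -> R) s t :
  sum_n_m (fun k => a * y k + b * z k) s t = a * sum_n_m y s t + b * sum_n_m z s t.
Proof.
  rewrite (sum_n_m_ext _ (fun k => plus (mult a (y k)) (mult b (z k)))) by reflexivity.
  rewrite (sum_n_m_plus (G:=R_AbelianMonoid)).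
  rewrite !(sum_n_m_mult_l (K:=R_Ring)). reflexivity.
Qed.

Lemma sum_shift (y : nat -> R) s j : sum_n (fun k => y (s + k)%nat) j = sum_n_m y s (s + j).
Proof.
  induction j as [|j IH].
  - rewrite sum_O, Nat.add_0_r, sum_n_n. reflexivity.
  - rewrite sum_Sn, IH. replace (s + S j)%nat with (S (s + j)) by lia.
    rewrite sum_n_Sm by lia. reflexivity.
Qed.

Lemma isum_ext_left I s (Hok : forall b, hi I = Some b -> (s <= b)%nat) (y : nat -> R) :
  (s < lo I)%nat -> ex_series y ->
  Isum (mkInterval s (hi I) Hok) y = sum_n_m y s (lo I - 1) + Isum I y.
Proof.
  revert Hok. destruct I as [l h Hh]; simpl. intros Hok Hsl Hy.
  destruct h as [bm|].
  - unfold Isum; simpl. assert (H := Hh bm eq_refl).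
    rewrite (sum_n_m_Chasles y s (l - 1) bm) by lia.
    replace (S (l - 1)) with l by lia. reflexivity.
  - unfold Isum; simpl.
    assert (Hy' : ex_series (fun k => y (s + k)%nat)) by (apply (ex_series_incr_n y s); exact Hy).
    rewrite (Series_incr_n _ (l - s)) by (auto; lia).
    rewrite <- sum_n_Reals, sum_shift.
    replace (s + Init.Nat.pred (l - s))%nat with (l - 1)%nat by lia.
    f_equal. apply Series_ext. intros k. f_equal. lia.
Qed.

Lemma isum_fin a b (y : nat -> R) : (a <= b)%nat -> Isum (mk_fin a b) y = sum_n_m y a b.
Proof. intros H. unfold Isum, mk_fin; cbn [hi lo]. rewrite Nat.max_r by lia; reflexivity. Qed.

Lemma inI_fin a b k : (a <= b)%nat -> inI (mk_fin a b) k -> (a <= k <= b)%nat.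
Proof.
  intros H [H1 H2]. unfold mk_fin in *; cbn [hi lo] in *. specialize (H2 _ eq_refl). lia.
Qed.

Lemma inI_fin_intro a b k : (a <= k <= b)%nat -> inI (mk_fin a b) k.
Proof.
  intros H. unfold mk_fin, inI; cbn [hi lo]. split; [lia|]. intros b0 E; injection E; lia.
Qed.

Lemma inI_between I c k : (lo I <= c)%nat -> (c <= k)%nat -> inI I k -> inI I c.
Proof.
  intros H1 H2 [H3 H4]. split; auto. intros b Hb. specialize (H4 b Hb). lia.
Qed.

Theorem proposition5p4 (F : option nat) (alpha : nat -> R) (Ifam : nat -> interval) :
  index_set_ok F ->
  is_series (fun n => (xseq F alpha n) ^ 2) 1 ->
  interval_family F Ifam ->
  extreme_BJ (xseq F alpha) ->
  ~ is_interval (supp_union (xseq F alpha) Ifam) ->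
  ~ extreme_BJdual (xstar F alpha Ifam).
Proof.
  intros Hok Hser Hfam Hext Hni Hdual.
  set (be := xseq F alpha) in *.
  destruct Hdual as [[Hlin Hbnd] Hextr].
  assert (HBJ : in_BJ be) by exact (proj1 Hext).
  assert (HbeF : forall j, be j <> 0 -> inF F j).
  { intros j Hj. unfold be, xseq in Hj. destruct (inFb F j) eqn:E; [apply inFb_inF; auto| lra]. }
  assert (Hpart : forall N, sum_n (fun j => be j ^ 2) N <= 1).
  { intros N. apply partial_le_limit; auto. intros; apply pow2_ge_0. }
  assert (HdI : forall i j, i <> j -> be i <> 0 -> be j <> 0 -> disj (Ifam i) (Ifam j)).
  { intros i j Hij Hi Hj. destruct (Nat.lt_gt_cases i j) as [[H|H] _]; auto.
    - intros k Hk Hk'. assert (Hlt := order_in F Ifam i j k Hfam H (HbeF j Hj) Hk).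
      destruct Hk' as [Hk' _]. lia.
    - intros k Hk Hk'. assert (Hlt := order_in F Ifam j i k Hfam H (HbeF i Hi) Hk').
      destruct Hk as [Hk _]. lia. }
  assert (Hf : forall y, xstar F alpha Ifam y = Series (fun j => be j * Isum (Ifam j) y)).
  { intros y; unfold xstar; apply Series_ext; intros j; unfold be, xseq; destruct (inFb F j); ring. }
  assert (Hj0 : exists j0, be j0 <> 0).
  { apply NNPP; intro H.
    assert (Hz : forall j, be j ^ 2 = ind 0 0 j).
    { intros j. unfold ind. destruct (Nat.eq_dec j 0); destruct (Req_EM_T (be j) 0) as [E|E];
        try (rewrite E; ring); exfalso; apply H; eauto. }
    assert (H1 := is_series_unique _ _ Hser).
    rewrite (Series_ext _ _ Hz), (is_series_unique _ _ (is_series_ind 0 0)) in H1. lra. }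
  destruct Hj0 as [j0 Hj0].
  assert (Hne : exists k, supp_union be Ifam k).
  { exists (lo (Ifam j0)), j0. split; [exact Hj0|]. split; [lia|].
    intros b Hb. exact (hi_ok _ _ Hb). }
  assert (Hgap : exists a b c, supp_union be Ifam a /\ supp_union be Ifam b /\
     (a <= c)%nat /\ (c <= b)%nat /\ ~ supp_union be Ifam c).
  { apply NNPP; intro Hno. apply Hni. split; [exact Hne|].
    intros a b c Ha Hb Hac Hcb. apply NNPP; intro Hc. apply Hno. exists a, b, c; auto. }
  destruct Hgap as [a [b [c [[na [Hna Ha]] [[nb [Hnb Hb]] [Hac [Hcb Hc]]]]]]].
  unfold supp in Hna, Hnb.
  assert (HcI : forall j, be j <> 0 -> ~ inI (Ifam j) c).
  { intros j Hj Hin. apply Hc. exists j; split; auto. }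
  assert (Hac' : (a < c)%nat).
  { destruct (Nat.eq_dec a c); [subst; exfalso; exact (HcI na Hna Ha)|lia]. }
  assert (Hcb' : (c < b)%nat).
  { destruct (Nat.eq_dec c b); [subst; exfalso; exact (HcI nb Hnb Hb)|lia]. }
  assert (Hnblo : (c < lo (Ifam nb))%nat).
  { destruct (Nat.lt_ge_cases c (lo (Ifam nb))) as [H|H]; auto.
    exfalso. apply (HcI nb Hnb). apply (inI_between _ c b); auto; lia. }
  destruct (least (fun j => be j <> 0 /\ (c < lo (Ifam j))%nat)) as [m [[Hm Hmlo] Hmin]].
  { exists nb; auto. }
  assert (Hnam : (na < m)%nat).
  { destruct (Compare_dec.lt_eq_lt_dec na m) as [[H|H]|H]; auto.
    - subst. destruct Ha as [Ha _]. lia.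
    - assert (H1 := order_lo F Ifam m na Hfam ltac:(lia) (HbeF na Hna)).
      destruct Ha as [Ha _]. lia. }
  destruct (greatest (fun j => be j <> 0) m) as [n [Hnm [Hn Hmax]]].
  { exists na; auto. }
  assert (Hz : forall j, (n < j < m)%nat -> be j = 0).
  { intros j Hj. destruct (Req_EM_T (be j) 0); auto. exfalso; exact (Hmax j Hj n0). }
  destruct (order F Ifam n m Hfam Hnm (HbeF m Hm)) as [hn [Hhn Hhnlt]].
  assert (Hlohn : (lo (Ifam n) <= hn)%nat) by exact (hi_ok _ _ Hhn).
  assert (Hhnc : (hn < c)%nat).
  { destruct (Nat.lt_ge_cases hn c) as [H|H]; auto. exfalso.
    destruct (Nat.lt_ge_cases c (lo (Ifam n))) as [H2|H2].
    - apply (Hmin n Hnm). split; auto.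
    - apply (HcI n Hn). split; auto. intros b' E. rewrite Hhn in E. injection E; lia. }
  assert (Hsign := sign_lemma be n m Hnm Hn Hm Hz Hser HBJ).
  set (L := (lo (Ifam m) - 1)%nat).
  assert (HL1 : (S hn <= L)%nat) by (unfold L; lia).
  assert (HL2 : (c <= L)%nat) by (unfold L; lia).
  assert (HL3 : S L = lo (Ifam m)) by (unfold L; lia).
  set (G := mk_fin (S hn) L).
  assert (HG : forall y, Isum G y = sum_n_m y (S hn) L).
  { intros y. apply isum_fin. lia. }
  set (K1n := mk_fin (lo (Ifam n)) L).
  set (K1 := fun j => if Nat.eq_dec j n then K1n else Ifam j).
  assert (Hok2 : forall b0, hi (Ifam m) = Some b0 -> (S hn <= b0)%nat).
  { intros b0 Hb0. assert (H := hi_ok _ _ Hb0). lia. }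
  set (K2m := mkInterval (S hn) (hi (Ifam m)) Hok2).
  set (K2 := fun j => if Nat.eq_dec j m then K2m else Ifam j).
  assert (Hn_vs : forall j, j <> n -> be j <> 0 -> disj K1n (Ifam j)).
  { intros j Hjn Hj k Hk Hk'. apply inI_fin in Hk; [|lia].
    destruct (Nat.lt_gt_cases j n) as [[H|H] _]; auto.
    - assert (Hlt := order_in F Ifam j n k Hfam H (HbeF n Hn) Hk'). lia.
    - assert (Hjm : (m <= j)%nat).
      { destruct (Nat.lt_ge_cases j m); auto. exfalso; apply Hj; apply Hz; lia. }
      assert (H1 := order_lo F Ifam m j Hfam Hjm (HbeF j Hj)). destruct Hk' as [Hk' _]. lia. }
  assert (Hm_vs : forall j, j <> m -> be j <> 0 -> disj K2m (Ifam j)).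
  { intros j Hjm Hj k Hk Hk'. destruct Hk as [Hk1 Hk2]. simpl in Hk1, Hk2.
    destruct (Nat.lt_gt_cases j m) as [[H|H] _]; auto.
    - assert (Hjn : (j <= n)%nat).
      { destruct (Nat.le_gt_cases j n); auto. exfalso; apply Hj; apply Hz; lia. }
      destruct (Nat.eq_dec j n) as [->|Hjn'].
      + destruct Hk' as [_ Hk']. specialize (Hk' _ Hhn). lia.
      + assert (Hlt := order_in F Ifam j n k Hfam ltac:(lia) (HbeF n Hn) Hk'). lia.
    - destruct (order F Ifam m j Hfam H (HbeF j Hj)) as [bm [Hbm Hbmlt]].
      specialize (Hk2 _ Hbm). destruct Hk' as [Hk' _]. lia. }
  assert (HdK1 : forall i j, i <> j -> be i <> 0 -> be j <> 0 -> disj (K1 i) (K1 j)).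
  { intros i j Hij Hi Hj. unfold K1.
    destruct (Nat.eq_dec i n); destruct (Nat.eq_dec j n); subst; try lia.
    - apply Hn_vs; auto.
    - apply disj_sym, Hn_vs; auto.
    - apply HdI; auto. }
  assert (HdK2 : forall i j, i <> j -> be i <> 0 -> be j <> 0 -> disj (K2 i) (K2 j)).
  { intros i j Hij Hi Hj. unfold K2.
    destruct (Nat.eq_dec i m); destruct (Nat.eq_dec j m); subst; try lia.
    - apply Hm_vs; auto.
    - apply disj_sym, Hm_vs; auto.
    - apply HdI; auto. }
  set (g1 := fun y => xstar F alpha Ifam y + be n * Isum G y).
  set (g2 := fun y => xstar F alpha Ifam y + be m * Isum G y).
  assert (Hexf : forall y, in_BJ y -> ex_series (fun j => be j * Isum (Ifam j) y)).
  { intros y [_ Hy]. apply (phi_ex be Ifam y 1); auto. }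
  assert (HG1 : in_BJdual g1).
  { split.
    - intros a0 b0 y z Hy Hz'. unfold g1. rewrite Hlin by auto. rewrite !HG, sum_lin. ring.
    - intros y Hy. unfold g1. rewrite Hf.
      replace (Series (fun j => be j * Isum (Ifam j) y) + be n * Isum G y)
        with (Series (fun j => be j * Isum (K1 j) y)).
      + apply phi_bound; auto.
      + rewrite <- (Series_ind_split _ n (be n * Isum G y)) by (apply Hexf; auto).
        apply Series_ext. intros j. unfold K1, ind.
        destruct (Nat.eq_dec j n) as [->|Hjn]; [|ring].
        rewrite HG. unfold K1n. rewrite isum_fin by lia. unfold Isum at 1. rewrite Hhn.
        rewrite (sum_n_m_Chasles y (lo (Ifam n)) hn L) by lia. 
        change (plus ?x ?y) with (x + y). ring. }
  assert (HG2 : in_BJdual g2).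
  { split.
    - intros a0 b0 y z Hy Hz'. unfold g2. rewrite Hlin by auto. rewrite !HG, sum_lin. ring.
    - intros y Hy. unfold g2. rewrite Hf.
      replace (Series (fun j => be j * Isum (Ifam j) y) + be m * Isum G y)
        with (Series (fun j => be j * Isum (K2 j) y)).
      + apply phi_bound; auto.
      + rewrite <- (Series_ind_split _ m (be m * Isum G y)) by (apply Hexf; auto).
        apply Series_ext. intros j. unfold K2, ind.
        destruct (Nat.eq_dec j m) as [->|Hjm]; [|ring].
        unfold K2m. rewrite isum_ext_left by (destruct Hy; auto; lia).
        rewrite HG. fold L. ring. }
  assert (HD : 0 < be m ^ 2 - be n * be m) by nra.
  set (t := be m ^ 2 / (be m ^ 2 - be n * be m)).
  assert (Ht : 0 < t < 1).
  { unfold t. split.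
    - apply Rdiv_lt_0_compat; nra.
    - apply (Rmult_lt_reg_r (be m ^ 2 - be n * be m)); auto.
      unfold Rdiv. rewrite Rmult_assoc, Rinv_l by lra. lra. }
  assert (Heq : forall y, inJ y -> xstar F alpha Ifam y = t * g1 y + (1 - t) * g2 y).
  { intros y _. unfold g1, g2, t. field. lra. }
  assert (HE := Hextr g1 g2 t HG1 HG2 Ht Heq (e c) (e_inJ c)).
  unfold g1, g2 in HE.
  rewrite (proj1 (isum_e G c)) in HE.
  - nra.
  - apply inI_fin_intro. lia.
Qed.
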